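(* Let $\alpha,\beta\in(0,\pi)$ with $\alpha+\beta\ge\pi$. Then \[ P(S_{\alpha,\beta})=\frac{1}{\sin\frac{\min\{\alpha,\beta,\alpha+\beta-\pi\}}{2}}, \] with the convention $1/\sin 0=+\infty$.
   Context: For $\alpha\in(0,2\pi)$, $S_\alpha=\{re^{it}: r>0,\ t\in(0,\alpha)\}$. For $\alpha,\beta\in(0,\pi)$ with $\alpha+\beta\ge\pi$ the double angular domain is \[ S_{\alpha,\beta}=S_\alpha\cap\{1+re^{it}: r>0,\ t\in(\pi-\beta,\pi)\}, \] whose boundary in $\overline{\mathbb{C}}$ is the Jordan curve formed by the segment $[0,1]$, two rays and the point $\infty$. For four distinct points $a,b,c,d\in\overline{\mathbb{C}}$ set $p(a,b,c,d)=\frac{|a-b||c-d|+|a-d||b-c|}{|a-c||b-d|}$, with the expression understood as a limit (factors containing $\infty$ cancelled) if one point is $\infty$. For a domain $D\subset\overline{\mathbb{C}}$ with Jordan boundary, $P(D)=\sup p(a,b,c,d)$ over all distinct $a,b,c,d\in\partial D$ occurring in this order along the positively oriented boundary. *)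

(* Defs.v *)
From Stdlib Require Import Reals Lra.
Open Scope R_scope.

(* Points of the extended plane: [Some (x,y)] is x+iy, [None] is infinity. *)
Definition ept := option (R * R).

Definition dist (z w : R * R) : R :=
  sqrt ((fst z - fst w)^2 + (snd z - snd w)^2).

(* p(a,b,c,d) = (|a-b||c-d| + |a-d||b-c|) / (|a-c||b-d|), with the
   factors containing infinity cancelled when exactly one point is infinite.
   (Two or more infinite points cannot occur among distinct points.) *)
Definition pcr (a b c d : ept) : R :=
  match a, b, c, d with
  | Some a, Some b, Some c, Some d =>
      (dist a b * dist c d + dist a d * dist b c) / (dist a c * dist b d)
  | None, Some b, Some c, Some d => (dist c d + dist b c) / dist b d
  | Some a, None, Some c, Some d => (dist c d + dist a d) / dist a c
  | Some a, Some b, None, Some d => (dist a b + dist a d) / dist b d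
  | Some a, Some b, Some c, None => (dist a b + dist b c) / dist a c
  | _, _, _, _ => 0
  end.

(* Positively oriented parametrization of the boundary of S_{alpha,beta}
   (the domain lies to the left):
   t <= 0 : the ray  |t| e^{i alpha}, traversed from infinity to 0;
   0<=t<=1: the segment [0,1];
   t >= 1 : the ray  1 + (t-1) e^{i(pi-beta)}, traversed from 1 to infinity.
   The parameter [None] is the point at infinity (t = -oo = +oo). *)
Definition bpar (alpha beta : R) (t : R) : R * R :=
  if Rle_dec t 0 then (- t * cos alpha, - t * sin alpha)
  else if Rle_dec t 1 then (t, 0)
  else (1 + (t - 1) * cos (PI - beta), (t - 1) * sin (PI - beta)).

Definition bpt (alpha beta : R) (s : option R) : ept :=
  match s with
  | Some t => Some (bpar alpha beta t)
  | None => None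
  end.

Definition plt (s u : option R) : Prop :=
  match s, u with
  | Some x, Some y => x < y
  | Some _, None => True
  | None, _ => False
  end.

Definition incr4 (s1 s2 s3 s4 : option R) : Prop :=
  plt s1 s2 /\ plt s2 s3 /\ plt s3 s4.

(* four (necessarily distinct) parameters occurring in this cyclic order
   along the positively oriented boundary circle *)
Definition cyc4 (s1 s2 s3 s4 : option R) : Prop :=
  incr4 s1 s2 s3 s4 \/ incr4 s2 s3 s4 s1 \/ incr4 s3 s4 s1 s2 \/
  incr4 s4 s1 s2 s3.

(* The set of values p(a,b,c,d), a,b,c,d distinct boundary points of
   S_{alpha,beta} in positive cyclic order; P(S_{alpha,beta}) is its sup. *)
Definition Pset (alpha beta : R) (v : R) : Prop :=
  exists s1 s2 s3 s4 : option R,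
    cyc4 s1 s2 s3 s4 /\
    v = pcr (bpt alpha beta s1) (bpt alpha beta s2)
            (bpt alpha beta s3) (bpt alpha beta s4).

(* Main.v *)
Require Import Defs.
From Stdlib Require Import Reals.
From Stdlib Require Import Lra Psatz.
Open Scope R_scope.
Local Notation dist := Defs.dist.


Lemma sq_sqrt (z : R) : 0 <= z -> sqrt z * sqrt z = z.
Proof. intros; apply sqrt_sqrt; auto. Qed.

Lemma sector (p1 p2 x y : R) : 0 < p2 - p1 < PI ->
  0 <= cos p1 * y - sin p1 * x -> 0 <= x * sin p2 - y * cos p2 ->
  exists d, p1 <= d <= p2 /\ x = sqrt (x^2+y^2) * cos d /\ y = sqrt (x^2+y^2) * sin d.
Proof.
  intros hw h1 h2.
  assert (hnn : 0 <= x^2+y^2) by nra.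
  set (r := sqrt (x^2+y^2)).
  assert (hr2 : r * r = x^2+y^2) by (apply sq_sqrt; auto).
  assert (hr0 : 0 <= r) by apply sqrt_pos.
  destruct (Req_dec r 0) as [e|ne].
  { exists p1. rewrite e in hr2. assert (x = 0 /\ y = 0) as [-> ->] by nra.
    rewrite e. split; [lra|]. split; ring. }
  assert (hr : 0 < r) by lra.
  pose proof (sin2_cos2 p1) as hcs. unfold Rsqr in hcs.
  set (c := cos p1) in *. set (s := sin p1) in *.
  set (x' := c * x + s * y). set (y' := c * y - s * x).
  assert (hxy : x'*x' + y'*y' = r*r) by (unfold x', y'; rewrite hr2; nra).
  set (k := x' / r).
  assert (hk : -1 <= k <= 1).
  { unfold k. split.
    - apply (Rmult_le_reg_r r); auto. field_simplify; [|lra]. nra.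
    - apply (Rmult_le_reg_r r); auto. field_simplify; [|lra]. nra. }
  set (d' := acos k).
  assert (hcd : cos d' = k) by (apply cos_acos; auto).
  assert (hsd : sin d' = y' / r).
  { unfold d'. rewrite sin_acos; auto.
    replace (1 - k²) with ((y'/r)*(y'/r)).
    - apply sqrt_square. unfold Rdiv; apply Rmult_le_pos; [unfold y'; lra | left; apply Rinv_0_lt_compat; auto].
    - unfold k, Rsqr. field_simplify_eq; [nra | lra]. }
  pose proof (acos_bound k) as hb. fold d' in hb.
  exists (p1 + d').
  assert (hc : x = r * cos (p1 + d')).
  { rewrite cos_plus. fold c s. rewrite hcd, hsd. unfold k, x', y'. field_simplify; [|lra]. transitivity (x*(s*s+c*c)); [rewrite hcs; ring | ring]. }
  assert (hs : y = r * sin (p1 + d')).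
  { rewrite sin_plus. fold c s. rewrite hcd, hsd. unfold k, x', y'. field_simplify; [|lra]. transitivity (y*(s*s+c*c)); [rewrite hcs; ring | ring]. }
  split; [|split; auto].
  split; [lra|].
  destruct (Rle_lt_dec (p1 + d') p2) as [ok|bad]; auto.
  exfalso.
  assert (sin (p2 - (p1 + d')) < 0) by (apply sin_lt_0_var; lra).
  rewrite sin_minus in H. rewrite hc, hs in h2. nra.
Qed.

Lemma ray (p l x y : R) : 0 <= l -> x = l * cos p -> y = l * sin p ->
  exists d, p <= d <= p /\ x = sqrt (x^2+y^2) * cos d /\ y = sqrt (x^2+y^2) * sin d.
Proof.
  intros hl hx hy. exists p. split; [lra|].
  assert (e : sqrt (x^2+y^2) = l).
  { pose proof (sin2_cos2 p) as hcs. unfold Rsqr in hcs.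
    replace (x^2+y^2) with (l*l) by (rewrite hx, hy; nra). apply sqrt_square; auto. }
  rewrite e; auto.
Qed.

Lemma c2p x : cos (x + 2*PI) = cos x.
Proof. rewrite cos_plus, cos_2PI, sin_2PI; ring. Qed.
Lemma s2p x : sin (x + 2*PI) = sin x.
Proof. rewrite sin_plus, cos_2PI, sin_2PI; ring. Qed.
Lemma cpm x : cos (PI - x) = - cos x.
Proof. rewrite cos_minus, cos_PI, sin_PI; ring. Qed.
Lemma spm x : sin (PI - x) = sin x.
Proof. rewrite sin_minus, cos_PI, sin_PI; ring. Qed.
Lemma c3b x : cos (3*PI - x) = - cos x.
Proof. replace (3*PI - x) with ((PI - x) + 2*PI) by ring. rewrite c2p; apply cpm. Qed.
Lemma s3b x : sin (3*PI - x) = sin x.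
Proof. replace (3*PI - x) with ((PI - x) + 2*PI) by ring. rewrite s2p; apply spm. Qed.
Lemma c3p : cos (3*PI) = -1.
Proof. replace (3*PI) with (PI + 2*PI) by ring. rewrite c2p; apply cos_PI. Qed.
Lemma s3p : sin (3*PI) = 0.
Proof. replace (3*PI) with (PI + 2*PI) by ring. rewrite s2p; apply sin_PI. Qed.
Lemma c4b x : cos (4*PI - x) = cos x.
Proof. replace (4*PI - x) with ((-x + 2*PI) + 2*PI) by ring. rewrite !c2p; apply cos_neg. Qed.
Lemma s4b x : sin (4*PI - x) = - sin x.
Proof. replace (4*PI - x) with ((-x + 2*PI) + 2*PI) by ring. rewrite !s2p; apply sin_neg. Qed.

Lemma chord_gen (p q : R*R) (P : R -> Prop) :
  (exists d, P d /\ fst q - fst p = sqrt ((fst q - fst p)^2 + (snd q - snd p)^2) * cos d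
                 /\ snd q - snd p = sqrt ((fst q - fst p)^2 + (snd q - snd p)^2) * sin d) ->
  exists d, P d /\ fst q - fst p = dist p q * cos d /\ snd q - snd p = dist p q * sin d.
Proof.
  intros [d [hp [h1 h2]]]. exists d.
  assert (e : dist p q = sqrt ((fst q - fst p)^2 + (snd q - snd p)^2)).
  { unfold dist. f_equal. ring. }
  rewrite e; auto.
Qed.

Lemma sg_pos a b : 0 < a < PI -> 0 < b < PI -> PI < a + b -> 0 < - (sin a * cos b + cos a * sin b).
Proof.
  intros ha hb hab.
  assert (h : 0 < sin (a + b - PI)) by (apply sin_gt_0; lra).
  rewrite sin_minus, sin_PI, cos_PI, sin_plus in h. lra.
Qed.

Ltac bparsimp := unfold bpar; simpl;
  repeat rewrite ?cpm, ?spm.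

Lemma chord_fwd a b t u : 0 < a < PI -> 0 < b < PI -> PI < a + b -> t < u ->
  exists d, (a + PI <= d <= 3*PI - b /\ (u <= 0 -> d <= a + PI) /\ (0 < t -> 2*PI <= d)
            /\ (u <= 1 -> d <= 2*PI) /\ (1 < t -> 3*PI - b <= d))
   /\ fst (bpar a b u) - fst (bpar a b t) = dist (bpar a b t) (bpar a b u) * cos d
   /\ snd (bpar a b u) - snd (bpar a b t) = dist (bpar a b t) (bpar a b u) * sin d.
Proof.
  intros ha hb hab htu. apply chord_gen.
  pose proof (sg_pos a b ha hb hab) as hsg.
  assert (hsa : 0 < sin a) by (apply sin_gt_0; lra).
  assert (hsb : 0 < sin b) by (apply sin_gt_0; lra).
  unfold bpar.
  destruct (Rle_dec t 0) as [t0|t0]; destruct (Rle_dec t 1) as [t1|t1];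
  destruct (Rle_dec u 0) as [u0|u0]; destruct (Rle_dec u 1) as [u1|u1];
  try (exfalso; lra); simpl; rewrite ?cpm, ?spm.
  -
    destruct (ray (a + PI) (u - t) (- u * cos a - - t * cos a) (- u * sin a - - t * sin a)) as [d [hd [e1 e2]]];
      [lra | rewrite neg_cos; ring | rewrite neg_sin; ring |].
    exists d; split; [repeat split; intros; lra | auto].
  -
    destruct (sector (a + PI) (2*PI) (u - - t * cos a) (0 - - t * sin a)) as [d [hd [e1 e2]]];
      [lra | rewrite neg_cos, neg_sin; nra | rewrite cos_2PI, sin_2PI; nra |].
    exists d; split; [repeat split; intros; lra | auto].
  -
    destruct (sector (a + PI) (3*PI - b) (1 + (u - 1) * - cos b - - t * cos a) ((u - 1) * sin b - - t * sin a)) as [d [hd [e1 e2]]];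
      [lra | rewrite neg_cos, neg_sin; nra | rewrite c3b, s3b; nra |].
    exists d; split; [repeat split; intros; lra | auto].
  -
    destruct (ray (2*PI) (u - t) (u - t) (0 - 0)) as [d [hd [e1 e2]]];
      [lra | rewrite cos_2PI; ring | rewrite sin_2PI; ring |].
    exists d; split; [repeat split; intros; lra | auto].
  -
    destruct (sector (2*PI) (3*PI - b) (1 + (u - 1) * - cos b - t) ((u - 1) * sin b - 0)) as [d [hd [e1 e2]]];
      [lra | rewrite cos_2PI, sin_2PI; nra | rewrite c3b, s3b; nra |].
    exists d; split; [repeat split; intros; lra | auto].
  -
    destruct (ray (3*PI - b) (u - t) (1 + (u - 1) * - cos b - (1 + (t - 1) * - cos b)) ((u - 1) * sin b - (t - 1) * sin b)) as [d [hd [e1 e2]]];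
      [lra | rewrite c3b; ring | rewrite s3b; ring |].
    exists d; split; [repeat split; intros; lra | auto].
Qed.

Lemma dist_sym p q : dist p q = dist q p.
Proof. unfold Defs.dist. f_equal. ring. Qed.

Lemma chord_wrap a b t u : 0 < a < PI -> 0 < b < PI -> PI < a + b -> t < u ->
  exists d, (a + 2*PI <= d <= 4*PI - b /\ (u <= 1 -> d <= 3*PI) /\ (0 < t -> 3*PI <= d)
            /\ (u <= 0 -> d <= a + 2*PI) /\ (1 < t -> 4*PI - b <= d))
   /\ fst (bpar a b t) - fst (bpar a b u) = dist (bpar a b t) (bpar a b u) * cos d
   /\ snd (bpar a b t) - snd (bpar a b u) = dist (bpar a b t) (bpar a b u) * sin d.
Proof.
  intros ha hb hab htu. rewrite dist_sym. apply chord_gen.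
  pose proof (sg_pos a b ha hb hab) as hsg.
  assert (hsa : 0 < sin a) by (apply sin_gt_0; lra).
  assert (hsb : 0 < sin b) by (apply sin_gt_0; lra).
  unfold bpar.
  destruct (Rle_dec t 0) as [t0|t0]; destruct (Rle_dec t 1) as [t1|t1];
  destruct (Rle_dec u 0) as [u0|u0]; destruct (Rle_dec u 1) as [u1|u1];
  try (exfalso; lra); simpl; rewrite ?cpm, ?spm.
  - destruct (ray (a + 2*PI) (u - t) (- t * cos a - - u * cos a) (- t * sin a - - u * sin a)) as [d [hd [e1 e2]]];
      [lra | rewrite c2p; ring | rewrite s2p; ring |].
    exists d; split; [repeat split; intros; lra | auto].
  - destruct (sector (a + 2*PI) (3*PI) (- t * cos a - u) (- t * sin a - 0)) as [d [hd [e1 e2]]];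
      [lra | rewrite c2p, s2p; nra | rewrite c3p, s3p; nra |].
    exists d; split; [repeat split; intros; lra | auto].
  - destruct (sector (a + 2*PI) (4*PI - b) (- t * cos a - (1 + (u - 1) * - cos b)) (- t * sin a - (u - 1) * sin b)) as [d [hd [e1 e2]]];
      [lra | rewrite c2p, s2p; nra | rewrite c4b, s4b; nra |].
    exists d; split; [repeat split; intros; lra | auto].
  - destruct (ray (3*PI) (u - t) (t - u) (0 - 0)) as [d [hd [e1 e2]]];
      [lra | rewrite c3p; ring | rewrite s3p; ring |].
    exists d; split; [repeat split; intros; lra | auto].
  - destruct (sector (3*PI) (4*PI - b) (t - (1 + (u - 1) * - cos b)) (0 - (u - 1) * sin b)) as [d [hd [e1 e2]]];
      [lra | rewrite c3p, s3p; nra | rewrite c4b, s4b; nra |].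
    exists d; split; [repeat split; intros; lra | auto].
  - destruct (ray (4*PI - b) (u - t) (1 + (t - 1) * - cos b - (1 + (u - 1) * - cos b)) ((t - 1) * sin b - (u - 1) * sin b)) as [d [hd [e1 e2]]];
      [lra | rewrite c4b; ring | rewrite s4b; ring |].
    exists d; split; [repeat split; intros; lra | auto].
Qed.

Lemma finish x y D m : 0 <= x -> 0 <= y -> 0 <= D -> 0 < m < PI ->
  x*x + y*y - 2*x*y*cos m <= D*D -> (x+y)/D <= 1/sin (m/2).
Proof.
  intros hx hy hD hm h.
  assert (hs : 0 < sin (m/2)) by (apply sin_gt_0; lra).
  assert (hs1 : sin (m/2) <= 1) by apply SIN_bound.
  assert (hc : cos m = 1 - 2 * sin (m/2) * sin (m/2)).
  { replace m with (2 * (m/2)) at 1 by field. apply cos_2a_sin. }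
  rewrite hc in h. set (s := sin (m/2)) in *. clearbody s.
  assert (hk : (x+y)*s <= D).
  { assert (0 <= (x-y)*(x-y)*(1 - s*s)) by (apply Rmult_le_pos; [apply Rle_0_sqr | nra]).
    assert (((x+y)*s)*((x+y)*s) <= D*D) by nra.
    assert (0 <= (x+y)*s) by nra. nra. }
  destruct (Req_dec D 0) as [e|ne].
  - rewrite e in hk |- *. assert (x + y = 0) by nra. rewrite H. unfold Rdiv. rewrite Rmult_0_l.
    left. apply Rmult_lt_0_compat; [lra| apply Rinv_0_lt_compat; auto].
  - apply (Rmult_le_reg_r (D*s)). nra.
    field_simplify; [|lra|lra]. nra.
Qed.

Lemma cosT_le T m : 0 < m < PI -> m <= T <= 2*PI - m -> cos T <= cos m.
Proof.
  intros hm hT. destruct (Rle_dec T PI).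
  - apply cos_decr_1; lra.
  - replace (cos T) with (cos (2*PI - T)).
    + apply cos_decr_1; lra.
    + rewrite cos_minus, cos_2PI, sin_2PI. ring.
Qed.

Lemma core4 (a b c d : R*R) m d1 d2 d3 d4 : 0 < m < PI ->
  fst b - fst a = dist a b * cos d1 -> snd b - snd a = dist a b * sin d1 ->
  fst c - fst b = dist b c * cos d2 -> snd c - snd b = dist b c * sin d2 ->
  fst d - fst c = dist c d * cos d3 -> snd d - snd c = dist c d * sin d3 ->
  fst a - fst d = dist a d * cos d4 -> snd a - snd d = dist a d * sin d4 ->
  m <= d2 - d1 + d4 - d3 <= 2*PI - m ->
  (dist a b * dist c d + dist a d * dist b c) / (dist a c * dist b d) <= 1 / sin (m/2).
Proof.
  intros hm h1 h2 h3 h4 h5 h6 h7 h8 hT.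
  apply finish; try (apply Rmult_le_pos; apply sqrt_pos); auto.
  assert (hc := cosT_le _ _ hm hT).
  set (r1 := dist a b) in *. set (r2 := dist b c) in *. set (r3 := dist c d) in *.
  set (r4 := dist a d) in *.
  assert (p1 : 0 <= r1) by apply sqrt_pos. assert (p2 : 0 <= r2) by apply sqrt_pos.
  assert (p3 : 0 <= r3) by apply sqrt_pos. assert (p4 : 0 <= r4) by apply sqrt_pos.
  clearbody r1 r2 r3 r4.
  destruct a as [a1 a2], b as [b1 b2], c as [c1 c2], d as [e1 e2]. simpl in *.
  assert (hac : dist (a1,a2) (c1,c2) * dist (a1,a2) (c1,c2) = (a1-c1)^2 + (a2-c2)^2).
  { unfold Defs.dist; apply sq_sqrt; simpl; apply Rplus_le_le_0_compat; apply pow2_ge_0. }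
  assert (hbd : dist (b1,b2) (e1,e2) * dist (b1,b2) (e1,e2) = (b1-e1)^2 + (b2-e2)^2).
  { unfold Defs.dist; apply sq_sqrt; simpl; apply Rplus_le_le_0_compat; apply pow2_ge_0. }
  replace (dist (a1, a2) (c1, c2) * dist (b1, b2) (e1, e2) * (dist (a1, a2) (c1, c2) * dist (b1, b2) (e1, e2)))
    with (((a1-c1)^2 + (a2-c2)^2) * ((b1-e1)^2 + (b2-e2)^2)) by (rewrite <- hac, <- hbd; ring).
  assert (Id : ((a1-c1)^2 + (a2-c2)^2) * ((b1-e1)^2 + (b2-e2)^2) =
     ((b1-a1)^2+(b2-a2)^2)*((e1-c1)^2+(e2-c2)^2) + ((a1-e1)^2+(a2-e2)^2)*((c1-b1)^2+(c2-b2)^2)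
     - 2*(((b1-a1)*(e1-c1) - (b2-a2)*(e2-c2))*((a1-e1)*(c1-b1) - (a2-e2)*(c2-b2))
          + ((b1-a1)*(e2-c2) + (b2-a2)*(e1-c1))*((a1-e1)*(c2-b2) + (a2-e2)*(c1-b1)))) by ring.
  rewrite Id. rewrite h1, h2, h3, h4, h5, h6, h7, h8.
  assert (ct : cos (d2 - d1 + d4 - d3) = cos (d2 + d4) * cos (d1 + d3) + sin (d2 + d4) * sin (d1 + d3)).
  { replace (d2 - d1 + d4 - d3) with ((d2 + d4) - (d1 + d3)) by ring. apply cos_minus. }
  rewrite !cos_plus, !sin_plus in ct.
  pose proof (sin2_cos2 d1). pose proof (sin2_cos2 d2). pose proof (sin2_cos2 d3). pose proof (sin2_cos2 d4).
  unfold Rsqr in *.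
  set (T := d2 - d1 + d4 - d3) in *.
  assert (hprod : 0 <= r1*r3*(r4*r2)) by (repeat apply Rmult_le_pos; auto).
  match goal with |- ?L <= ?R => replace R with
     ((r1*r3)*(r1*r3) + (r4*r2)*(r4*r2) - 2*(r1*r3)*(r4*r2)*cos T) end.
  - nra.
  - rewrite ct. 
    transitivity (r1*r1*(sin d1 * sin d1 + cos d1 * cos d1) * (r3*r3*(sin d3 * sin d3 + cos d3 * cos d3))
      + r4*r4*(sin d4 * sin d4 + cos d4 * cos d4) * (r2*r2*(sin d2 * sin d2 + cos d2 * cos d2))
      - 2*(r1*r3)*(r4*r2)*((cos d2 * cos d4 - sin d2 * sin d4) * (cos d1 * cos d3 - sin d1 * sin d3) +
       (sin d2 * cos d4 + cos d2 * sin d4) * (sin d1 * cos d3 + cos d1 * sin d3))).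
    + rewrite H, H0, H1, H2. ring.
    + ring.
Qed.

Lemma core3 (a b c : R*R) m d1 d2 : 0 < m < PI ->
  fst b - fst a = dist a b * cos d1 -> snd b - snd a = dist a b * sin d1 ->
  fst c - fst b = dist b c * cos d2 -> snd c - snd b = dist b c * sin d2 ->
  0 <= d2 - d1 <= PI - m ->
  (dist a b + dist b c) / dist a c <= 1 / sin (m/2).
Proof.
  intros hm h1 h2 h3 h4 hT.
  apply finish; try apply sqrt_pos; auto.
  assert (hc : cos (PI - m) <= cos (d2 - d1)) by (apply cos_decr_1; lra).
  rewrite cpm in hc.
  set (r1 := dist a b) in *. set (r2 := dist b c) in *.
  assert (p1 : 0 <= r1) by apply sqrt_pos. assert (p2 : 0 <= r2) by apply sqrt_pos.
  clearbody r1 r2.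
  destruct a as [a1 a2], b as [b1 b2], c as [c1 c2]. simpl in *.
  assert (hac : dist (a1,a2) (c1,c2) * dist (a1,a2) (c1,c2) = (a1-c1)^2 + (a2-c2)^2).
  { unfold Defs.dist; apply sq_sqrt; simpl; apply Rplus_le_le_0_compat; apply pow2_ge_0. }
  rewrite hac.
  replace ((a1-c1)^2 + (a2-c2)^2) with ((b1-a1 + (c1-b1))^2 + (b2-a2 + (c2-b2))^2) by ring.
  rewrite h1, h2, h3, h4.
  rewrite cos_minus in hc.
  pose proof (sin2_cos2 d1). pose proof (sin2_cos2 d2). unfold Rsqr in *.
  assert (hprod : 0 <= r1*r2) by (apply Rmult_le_pos; auto).
  transitivity (r1*r1 + r2*r2 + 2*(r1*r2)*(cos d2 * cos d1 + sin d2 * sin d1)).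
  - nra.
  - right. transitivity (r1*r1*(sin d1 * sin d1 + cos d1 * cos d1) + r2*r2*(sin d2 * sin d2 + cos d2 * cos d2)
       + 2*(r1*r2)*(cos d2 * cos d1 + sin d2 * sin d1)).
    + rewrite H, H0; ring.
    + ring.
Qed.

Ltac piece t := destruct (Rle_lt_dec t 0); [|destruct (Rle_lt_dec t 1)].

Ltac spec_all := repeat match goal with
  | H : ?P -> _ |- _ => first [ specialize (H ltac:(assumption)) | specialize (H ltac:(lra)) | clear H ] end.

Lemma upper_fin a b m t1 t2 t3 t4 : 0 < a < PI -> 0 < b < PI -> PI < a + b ->
  0 < m -> m <= a -> m <= b -> m <= a + b - PI -> t1 < t2 -> t2 < t3 -> t3 < t4 ->
  pcr (Some (bpar a b t1)) (Some (bpar a b t2)) (Some (bpar a b t3)) (Some (bpar a b t4)) <= 1 / sin (m/2).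
Proof.
  intros ha hb hab hm0 hma hmb hmg h12 h23 h34.
  destruct (chord_fwd a b t1 t2 ha hb hab h12) as [d1 [[B1 [B2 [B3 [B4 B5]]]] [e1 f1]]].
  destruct (chord_fwd a b t2 t3 ha hb hab h23) as [d2 [[C1 [C2 [C3 [C4 C5]]]] [e2 f2]]].
  destruct (chord_fwd a b t3 t4 ha hb hab h34) as [d3 [[D1 [D2 [D3 [D4 D5]]]] [e3 f3]]].
  destruct (chord_wrap a b t1 t4 ha hb hab ltac:(lra)) as [d4 [[E1 [E2 [E3 [E4 E5]]]] [e4 f4]]].
  simpl. apply (core4 _ _ _ _ m d1 d2 d3 d4); auto; [lra|].
  piece t1; piece t2; try (exfalso; lra); piece t3; try (exfalso; lra);
  piece t4; try (exfalso; lra); spec_all; lra.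
Qed.

Lemma upper_inf a b m t1 t2 t3 : 0 < a < PI -> 0 < b < PI -> PI < a + b ->
  0 < m -> m <= a -> m <= b -> m <= a + b - PI -> t1 < t2 -> t2 < t3 ->
  pcr (Some (bpar a b t1)) (Some (bpar a b t2)) (Some (bpar a b t3)) None <= 1 / sin (m/2).
Proof.
  intros ha hb hab hm0 hma hmb hmg h12 h23.
  destruct (chord_fwd a b t1 t2 ha hb hab h12) as [d1 [[B1 [B2 [B3 [B4 B5]]]] [e1 f1]]].
  destruct (chord_fwd a b t2 t3 ha hb hab h23) as [d2 [[C1 [C2 [C3 [C4 C5]]]] [e2 f2]]].
  simpl. apply (core3 _ _ _ m d1 d2); auto; [lra|].
  piece t1; piece t2; try (exfalso; lra); piece t3; try (exfalso; lra); spec_all; lra.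
Qed.

Lemma pcr_rot x y z w : pcr x y z w = pcr y z w x.
Proof.
  destruct x as [x|], y as [y|], z as [z|], w as [w|]; simpl; auto.
  all: rewrite ?(dist_sym y x), ?(dist_sym z x), ?(dist_sym w x), ?(dist_sym z y), ?(dist_sym w y), ?(dist_sym w z).
  all: try (f_equal; ring).
  all: idtac.
Qed.

Lemma upper_incr a b m s1 s2 s3 s4 : 0 < a < PI -> 0 < b < PI -> PI < a + b ->
  0 < m -> m <= a -> m <= b -> m <= a + b - PI -> incr4 s1 s2 s3 s4 ->
  pcr (bpt a b s1) (bpt a b s2) (bpt a b s3) (bpt a b s4) <= 1 / sin (m/2).
Proof.
  intros ha hb hab hm0 hma hmb hmg [h1 [h2 h3]].
  destruct s1 as [t1|], s2 as [t2|], s3 as [t3|], s4 as [t4|]; simpl in *; try contradiction.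
  - apply upper_fin; auto.
  - apply upper_inf; auto.
Qed.

Lemma upper_cyc a b m s1 s2 s3 s4 : 0 < a < PI -> 0 < b < PI -> PI < a + b ->
  0 < m -> m <= a -> m <= b -> m <= a + b - PI -> cyc4 s1 s2 s3 s4 ->
  pcr (bpt a b s1) (bpt a b s2) (bpt a b s3) (bpt a b s4) <= 1 / sin (m/2).
Proof.
  intros ha hb hab hm0 hma hmb hmg [h|[h|[h|h]]].
  - apply upper_incr; auto.
  - rewrite pcr_rot. apply upper_incr; auto.
  - rewrite pcr_rot, pcr_rot. apply upper_incr; auto.
  - rewrite pcr_rot, pcr_rot, pcr_rot. apply upper_incr; auto.
Qed.

Lemma sqrt_eq z w : 0 <= w -> z = w*w -> sqrt z = w.
Proof. intros h ->. apply sqrt_square; auto. Qed.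

Lemma half_sin x : 0 < x < PI -> 2 - 2 * cos x = (2*sin (x/2))*(2*sin(x/2)) /\ 0 < sin (x/2).
Proof.
  intros hx. split.
  - replace x with (2*(x/2)) at 1 by field. rewrite cos_2a_sin. ring.
  - apply sin_gt_0; lra.
Qed.

Lemma val_alpha a b : 0 < a < PI ->
  pcr (bpt a b (Some (-1))) (bpt a b (Some 0)) (bpt a b (Some 1)) None = 1 / sin (a/2).
Proof.
  intros ha. simpl. unfold bpar.
  destruct (Rle_dec (-1) 0); [|lra]. destruct (Rle_dec 0 0); [|lra].
  destruct (Rle_dec 1 0); [lra|]. destruct (Rle_dec 1 1); [|lra].
  unfold Defs.dist; simpl.
  destruct (half_sin a ha) as [h hs].
  pose proof (sin2_cos2 a) as hc; unfold Rsqr in hc.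
  rewrite (sqrt_eq _ 1), (sqrt_eq _ 1), (sqrt_eq _ (2 * sin (a/2))); try lra.
  all: first [field; lra | rewrite <- h; nra | ring | nra].
Qed.

Lemma val_beta a b : 0 < b < PI ->
  pcr (bpt a b (Some 0)) (bpt a b (Some 1)) (bpt a b (Some 2)) None = 1 / sin (b/2).
Proof.
  intros hb. simpl. unfold bpar.
  destruct (Rle_dec 0 0); [|lra].
  destruct (Rle_dec 1 0); [lra|]. destruct (Rle_dec 1 1); [|lra].
  destruct (Rle_dec 2 0); [lra|]. destruct (Rle_dec 2 1); [lra|].
  unfold Defs.dist; simpl. rewrite cpm, spm.
  destruct (half_sin b hb) as [h hs].
  pose proof (sin2_cos2 b) as hc; unfold Rsqr in hc.
  rewrite (sqrt_eq _ 1), (sqrt_eq _ 1), (sqrt_eq _ (2 * sin (b/2))); try lra.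
  all: first [field; lra | rewrite <- h; nra | ring | nra].
Qed.

Lemma in_alpha a b : 0 < a < PI -> Pset a b (1 / sin (a/2)).
Proof.
  intros ha. exists (Some (-1)), (Some 0), (Some 1), None. split.
  - left. unfold incr4, plt. repeat split; lra.
  - symmetry; apply val_alpha; auto.
Qed.

Lemma in_beta a b : 0 < b < PI -> Pset a b (1 / sin (b/2)).
Proof.
  intros hb. exists (Some 0), (Some 1), (Some 2), None. split.
  - left. unfold incr4, plt. repeat split; lra.
  - symmetry; apply val_beta; auto.
Qed.

Lemma gam_elem a b R : 0 < a < PI -> 0 < b < PI -> PI <= a + b -> 1 <= R ->
  exists v, Pset a b v /\ 2*R - 1 <= v * (1 + 2*R*sin ((a+b-PI)/2)).
Proof.
  intros ha hb hab hR.
  exists (pcr (bpt a b (Some (-R))) (bpt a b (Some 0)) (bpt a b (Some (1+R))) None). split.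
  { exists (Some (-R)), (Some 0), (Some (1+R)), None. split; auto.
    left. unfold incr4, plt. repeat split; lra. }
  assert (hs0 : 0 <= sin ((a+b-PI)/2)) by (apply sin_ge_0; lra).
  assert (hg0 : 0 <= sin (a+b-PI)) by (apply sin_ge_0; lra).
  assert (hcg : cos (a+b-PI) = 1 - 2 * sin ((a+b-PI)/2) * sin ((a+b-PI)/2)).
  { replace (a+b-PI) with (2*((a+b-PI)/2)) at 1 by field. apply cos_2a_sin. }
  rewrite cos_minus, cos_PI, sin_PI, cos_plus in hcg.
  rewrite sin_minus, cos_PI, sin_PI, sin_plus in hg0.
  assert (hsb : 0 < sin b) by (apply sin_gt_0; lra).
  pose proof (sin2_cos2 a) as hca. pose proof (sin2_cos2 b) as hcb. unfold Rsqr in hca, hcb.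
  pose proof (COS_bound b) as [_ hcb1].
  simpl. unfold bpar.
  destruct (Rle_dec (-R) 0); [|lra]. destruct (Rle_dec 0 0); [|lra].
  destruct (Rle_dec (1+R) 0); [lra|]. destruct (Rle_dec (1+R) 1); [lra|].
  unfold Defs.dist; simpl. rewrite cpm, spm. replace (1 + R - 1) with R by ring.
  set (s := sin ((a+b-PI)/2)) in *. set (ca := cos a) in *. set (sa := sin a) in *.
  set (cb := cos b) in *. set (sb := sin b) in *. clearbody s ca sa cb sb.
  rewrite (sqrt_eq _ R); [|lra| ring_simplify; transitivity (R*R*(sa*sa+ca*ca)); [ring|rewrite hca; ring]].
  match goal with |- _ <= (R + sqrt ?A) / sqrt ?B * _ => set (X2 := A); set (X3 := B) end.
  assert (hX2 : (R-1)*(R-1) <= X2).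
  { unfold X2. transitivity (1 - 2*R*cb + R*R*(sb*sb+cb*cb)).
    - rewrite hcb. nra.
    - right; ring. }
  assert (hN2 : R - 1 <= sqrt X2).
  { rewrite <- (sqrt_square (R-1)); [|lra]. apply sqrt_le_1_alt. auto. }
  assert (e4 : 4*s*s = (ca+cb)*(ca+cb) + (sa-sb)*(sa-sb)).
  { transitivity ((sa*sa+ca*ca) + (sb*sb+cb*cb) + 2*(ca*cb - sa*sb)); [|ring].
    rewrite hca, hcb. lra. }
  assert (hX3u : X3 <= (1 + 2*R*s)*(1 + 2*R*s)).
  { unfold X3. transitivity (R*R*(4*s*s) - 2*R*(ca+cb) + 1).
    - rewrite e4. right; ring.
    - assert (hq : (ca+cb)*(ca+cb) <= 4*s*s) by (pose proof (Rle_0_sqr (sa-sb)); unfold Rsqr in *; lra).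
      assert (ca + cb >= - 2*s).
      { destruct (Rlt_le_dec (ca+cb) (-2*s)) as [hl|hl]; [|lra].
        assert (0 < (-(ca+cb) - 2*s) * (-(ca+cb) + 2*s)) by (apply Rmult_lt_0_compat; lra). nra. }
      assert (R*(ca+cb) >= R*(-2*s)) by (apply Rmult_ge_compat_l; lra). nra. }
  assert (hX3l : sb*sb <= X3).
  { unfold X3.
    assert (hcs : 0 <= (cb*(R*ca - 1 + R*cb) - sb*(R*sa - R*sb))*(cb*(R*ca - 1 + R*cb) - sb*(R*sa - R*sb)))
      by apply Rle_0_sqr.
    assert (hg : sb <= - cb * (R*sa - R*sb) - sb*(R*ca - 1 + R*cb)).
    { assert (0 <= R * (- (sa * cb + ca * sb))) by (apply Rmult_le_pos; lra). nra. }
    assert (hgg : sb*sb <= (- cb * (R*sa - R*sb) - sb*(R*ca - 1 + R*cb)) * (- cb * (R*sa - R*sb) - sb*(R*ca - 1 + R*cb))) by nra.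
    transitivity ((- cb * (R*sa - R*sb) - sb*(R*ca - 1 + R*cb)) * (- cb * (R*sa - R*sb) - sb*(R*ca - 1 + R*cb))
        + (cb*(R*ca - 1 + R*cb) - sb*(R*sa - R*sb))*(cb*(R*ca - 1 + R*cb) - sb*(R*sa - R*sb))).
    - lra.
    - right. transitivity (((R*ca - 1 + R*cb)^2 + (R*sa - R*sb)^2)*(sb*sb+cb*cb)); [ring|].
      rewrite hcb. ring. }
  clearbody X2 X3.
  assert (hD : 0 < sqrt X3).
  { apply sqrt_lt_R0. nra. }
  assert (hDu : sqrt X3 <= 1 + 2*R*s).
  { rewrite <- (sqrt_square (1 + 2*R*s)); [|nra]. apply sqrt_le_1_alt. auto. }
  assert (hv : (R + sqrt X2) / sqrt X3 * sqrt X3 = R + sqrt X2) by (field; lra).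
  assert (hv0 : 0 <= (R + sqrt X2) / sqrt X3).
  { unfold Rdiv. apply Rmult_le_pos; [lra | left; apply Rinv_0_lt_compat; auto]. }
  assert ((R + sqrt X2) / sqrt X3 * sqrt X3 <= (R + sqrt X2) / sqrt X3 * (1 + 2*R*s))
    by (apply Rmult_le_compat_l; auto).
  set (v := (R + sqrt X2) / sqrt X3) in *. clearbody v. lra.
Qed.

Theorem theorem1p4 (alpha beta : R)
  (ha : 0 < alpha < PI) (hb : 0 < beta < PI) (hab : PI <= alpha + beta) :
  let m := Rmin alpha (Rmin beta (alpha + beta - PI)) in
  (0 < m -> is_lub (Pset alpha beta) (1 / sin (m / 2))) /\
  (m = 0 -> ~ bound (Pset alpha beta)).
Proof.
  intros m.
  assert (h1 : m <= alpha) by apply Rmin_l.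
  assert (h2 : m <= beta) by (eapply Rle_trans; [apply Rmin_r | apply Rmin_l]).
  assert (h3 : m <= alpha + beta - PI) by (eapply Rle_trans; [apply Rmin_r | apply Rmin_r]).
  assert (hcase : m = alpha \/ m = beta \/ m = alpha + beta - PI).
  { unfold m, Rmin. destruct (Rle_dec beta (alpha + beta - PI));
    destruct (Rle_dec alpha _); auto. }
  clearbody m.
  split.
  - intros hm0. split.
    + intros v [s1 [s2 [s3 [s4 [hc ->]]]]]. apply upper_cyc; auto; lra.
    + intros Bd hB.
      assert (hBa : 1 / sin (alpha/2) <= Bd) by (apply hB, in_alpha; auto).
      assert (hsa : 0 < sin (alpha/2)) by (apply sin_gt_0; lra).
      assert (hBp : 0 < Bd).
      { eapply Rlt_le_trans; [|apply hBa]. unfold Rdiv. rewrite Rmult_1_l. apply Rinv_0_lt_compat; auto. }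
      destruct hcase as [e|[e|e]].
      * rewrite e; auto.
      * rewrite e. apply hB, in_beta; auto.
      * rewrite e.
        assert (hs : 0 < sin ((alpha + beta - PI)/2)) by (apply sin_gt_0; lra).
        set (s := sin ((alpha + beta - PI)/2)) in *.
        destruct (Rle_lt_dec (1/s) Bd) as [ok|bad]; auto. exfalso.
        assert (hBs : Bd * s < 1).
        { apply (Rmult_lt_compat_r s) in bad; auto. unfold Rdiv in bad.
          rewrite Rmult_assoc, Rinv_l in bad; lra. }
        set (R0 := (2 + Bd) / (1 - Bd*s)).
        assert (hR0 : R0 * (1 - Bd*s) = 2 + Bd) by (unfold R0; field; lra).
        assert (hR1 : 1 <= R0).
        { unfold R0. apply (Rmult_le_reg_r (1 - Bd*s)); [nra|].
          unfold Rdiv. rewrite Rmult_assoc, Rinv_l; nra. }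
        destruct (gam_elem alpha beta R0 ha hb hab hR1) as [v [hv hle]].
        fold s in hle.
        assert (hvB : v <= Bd) by (apply hB; auto).
        assert (v * (1 + 2*R0*s) <= Bd * (1 + 2*R0*s)) by (apply Rmult_le_compat_r; nra).
        clearbody R0 s. nra.
  - intros hm0 [M hM].
    assert (hg : alpha + beta - PI = 0) by (destruct hcase as [e|[e|e]]; lra).
    destruct (gam_elem alpha beta (Rabs M + 2) ha hb hab) as [v [hv hle]].
    { pose proof (Rabs_pos M); lra. }
    rewrite hg in hle. replace (0/2) with 0 in hle by field. rewrite sin_0, Rmult_0_r, Rplus_0_r, Rmult_1_r in hle.
    assert (hvM : v <= M) by (apply hM; auto).
    pose proof (Rle_abs M). pose proof (Rabs_pos M). lra.
Qed.
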